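(* Fix any $\theta=(A,B)$ with $A\in\mathbb{R}^{p\times d}$, $B\in\mathbb{R}^{d\times d}$ and let $\theta^{\star}$ be the projection of $\theta$ onto $\mathcal{S}$ in the $P$-norm, and $\Delta=\theta-\theta^{\star}$. Then: 1. The matrix $\Delta^{\top}P\theta^{\star}\Sigma$ is symmetric. 2. $K_0 \le \sigma_d^2(P^{1/2}\theta^{\star}\Sigma)$ and $\sigma_1^2(P^{1/2}\theta^{\star}\Sigma)\le K_1$, where $K_0 = 2\sigma_d(M\Sigma^{1/2})\sigma_d(\Sigma)$ and $K_1 = 2\sigma_1(M\Sigma^{1/2})\sigma_1(\Sigma)$.
   Context: $\Sigma\in\mathbb{R}^{d\times d}$ is positive definite, $M\in\mathbb{R}^{p\times d}$ with $p\ge d$ and $M\Sigma^{1/2}$ of full column rank. Let $U\Gamma V^{\top}$ be an SVD of $M\Sigma^{1/2}$ with $U\in\mathbb{R}^{p\times d}$, $V\in\mathbb{R}^{d\times d}$, $U^{\top}U=V^{\top}V=I_d$, $\Gamma$ diagonal positive definite. $\mathcal{S}=\left\{\begin{bmatrix}U\Gamma^{1/2}J^{\top}\Sigma^{-1/2}\\ \Sigma^{-1/2}V\Gamma^{1/2}J^{\top}\Sigma^{-1/2}\end{bmatrix}: J\in\mathbb{O}_d\right\}$. $P=\begin{bmatrix}I_p&0\\0&\Sigma\end{bmatrix}$, $\|\theta\|_P=\sqrt{\mathrm{Tr}(\theta^{\top}P\theta)}$. $\sigma_i$ denote ordered singular values, largest first. *)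

(* Defs.v *)
From mathcomp Require Import all_boot all_order all_algebra.
From mathcomp Require Import reals.
Set Implicit Arguments. Unset Strict Implicit. Unset Printing Implicit Defensive.
Import Order.TTheory GRing.Theory Num.Theory.
Local Open Scope ring_scope.

Section Defs.
Variable R : realType.

Definition posdef n (S : 'M[R]_n) : Prop :=
  S^T = S /\ forall x : 'cV[R]_n, x != 0 -> 0 < (x^T *m S *m x) 0 0.

Definition orthogonal n (J : 'M[R]_n) : Prop := J^T *m J = 1%:M.

(* thin SVD X = U diag(s) V^T, U with orthonormal columns, V orthogonal,
   s entrywise nonnegative (no ordering imposed) *)
Definition is_svd m n (X : 'M[R]_(m, n)) (U : 'M[R]_(m, n)) (s : 'rV[R]_n)
  (V : 'M[R]_n) : Prop :=
  [/\ U^T *m U = 1%:M, V^T *m V = 1%:M, (forall i, 0 <= s 0 i)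
    & X = U *m diag_mx s *m V^T].

Definition singvals m n (X : 'M[R]_(m, n)) (s : 'rV[R]_n) : Prop :=
  (forall i j : 'I_n, (i <= j)%N -> s 0 j <= s 0 i) /\
  exists U V, is_svd X U s V.

Definition Pnorm m n (P : 'M[R]_m) (th : 'M[R]_(m, n)) : R :=
  Num.sqrt (\tr (th^T *m P *m th)).

Definition diag_sqrt n (g : 'rV[R]_n) : 'M[R]_n := diag_mx (map_mx Num.sqrt g).

Definition Selem p d (U : 'M[R]_(p, d)) (g : 'rV[R]_d) (V : 'M[R]_d)
  (S12 : 'M[R]_d) (J : 'M[R]_d) : 'M[R]_(p + d, d) :=
  col_mx (U *m diag_sqrt g *m J^T *m invmx S12)
         (invmx S12 *m V *m diag_sqrt g *m J^T *m invmx S12).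

Definition inS p d U g V S12 (th : 'M[R]_(p + d, d)) : Prop :=
  exists J, orthogonal J /\ th = @Selem p d U g V S12 J.

Definition Pmat p d (Sigma : 'M[R]_d) : 'M[R]_(p + d) := block_mx 1%:M 0 0 Sigma.
End Defs.

(* Main.v *)
Require Import Defs.
From mathcomp Require Import all_boot all_order all_algebra.
From mathcomp Require Import reals.
From mathcomp Require Import ring lra.
Import Order.TTheory GRing.Theory Num.Theory.
Set Implicit Arguments. Unset Strict Implicit. Unset Printing Implicit Defensive.
Local Open Scope ring_scope.

Definition cnorm (R : realType) n (x : 'cV[R]_n) : R := (x^T *m x) 0 0.

Lemma cnormE (R : realType) n (x : 'cV[R]_n) : cnorm x = \sum_i x i 0 ^+ 2.
Proof. by rewrite /cnorm mxE; apply: eq_bigr => i _; rewrite mxE expr2. Qed.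

Lemma cnorm_ge0 (R : realType) n (x : 'cV[R]_n) : 0 <= cnorm x.
Proof. by rewrite cnormE; apply: sumr_ge0 => i _; apply: sqr_ge0. Qed.

Lemma cnorm_eq0 (R : realType) n (x : 'cV[R]_n) : cnorm x = 0 -> x = 0.
Proof.
rewrite cnormE => /psumr_eq0P H; apply/matrixP => i j; rewrite ord1 mxE.
by apply/eqP; rewrite -sqrf_eq0; apply/eqP; apply: H => // k _; apply: sqr_ge0.
Qed.

Lemma cnormU (R : realType) m n (U : 'M[R]_(m, n)) (z : 'cV[R]_n) :
  U^T *m U = 1%:M -> cnorm (U *m z) = cnorm z.
Proof. by move=> UU; rewrite /cnorm trmx_mul mulmxA -(mulmxA z^T) UU mulmx1. Qed.

Lemma cnorm_diag (R : realType) n (s : 'rV[R]_n) (w : 'cV[R]_n) :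
  cnorm (diag_mx s *m w) = \sum_i s 0 i ^+ 2 * w i 0 ^+ 2.
Proof.
rewrite cnormE; apply: eq_bigr => i _; rewrite mul_diag_mx mxE exprMn //.
Qed.

Lemma tr_delta (R : realType) n (A : 'M[R]_n) i j : \tr (A *m delta_mx i j) = A j i.
Proof.
rewrite /mxtrace (bigD1 j) //= big1 ?addr0 => [|k nk].
  rewrite mxE (bigD1 i) //= big1 ?addr0 => [|l nl]; first by rewrite mxE !eqxx mulr1.
  by rewrite mxE (negbTE nl) mulr0.
by rewrite mxE big1 // => l _; rewrite mxE (negbTE nk) andbF mulr0.
Qed.

Lemma tr_ge0 (R : realType) m n (W : 'M[R]_(m, n)) : 0 <= \tr (W^T *m W).
Proof.
rewrite /mxtrace; apply: sumr_ge0 => i _; rewrite mxE; apply: sumr_ge0 => k _.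
by rewrite mxE -expr2 sqr_ge0.
Qed.

Lemma posdef_unit (R : realType) n (S : 'M[R]_n) : posdef S -> S \in unitmx.
Proof.
case=> _ H; rewrite unitmxE unitfE; apply/negP => /det0P [v v0 vS].
have : v^T != 0 by rewrite -(inj_eq (@trmx_inj _ _ _)) trmxK trmx0.
move=> /H; rewrite trmxK vS mul0mx mxE; by rewrite ltxx.
Qed.

Lemma svd_norm (R : realType) m n (X U : 'M[R]_(m, n)) (s : 'rV[R]_n) (V : 'M[R]_n)
  (x : 'cV[R]_n) : is_svd X U s V ->
  cnorm (X *m x) = \sum_i s 0 i ^+ 2 * (V^T *m x) i 0 ^+ 2 /\ cnorm (V^T *m x) = cnorm x.
Proof.
case=> UU VV _ ->; split.
  by rewrite -!mulmxA cnormU // cnorm_diag.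
by rewrite cnormU // trmxK; apply: mulmx1C.
Qed.

Lemma svd_bounds (R : realType) m n (X U : 'M[R]_(m, n)) (s : 'rV[R]_n) (V : 'M[R]_n)
  (lo hi : R) (x : 'cV[R]_n) : is_svd X U s V ->
  (forall i, lo <= s 0 i ^+ 2 <= hi) ->
  lo * cnorm x <= cnorm (X *m x) <= hi * cnorm x.
Proof.
move=> sv H; have [-> <-] := svd_norm x sv.
rewrite cnormE !mulr_sumr; apply/andP; split; apply: ler_sum => i _;
  apply: ler_wpM2r; rewrite ?sqr_ge0 //; by case/andP: (H i).
Qed.

Lemma svd_col (R : realType) m n (X U : 'M[R]_(m, n)) (s : 'rV[R]_n) (V : 'M[R]_n)
  (k : 'I_n) : is_svd X U s V ->
  cnorm (X *m (V *m delta_mx k 0)) = s 0 k ^+ 2 /\ cnorm (V *m delta_mx k 0) = 1.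
Proof.
move=> sv; have [-> <-] := svd_norm (V *m delta_mx k 0) sv.
case: sv => _ VV _ _; rewrite mulmxA VV mul1mx; split.
  rewrite (bigD1 k) //= big1 ?addr0 => [|i ni]; first by rewrite mxE !eqxx expr1n mulr1.
  by rewrite mxE (negbTE ni) expr0n mulr0.
rewrite cnormE (bigD1 k) //= big1 ?addr0 => [|i ni]; first by rewrite mxE !eqxx expr1n.
by rewrite mxE (negbTE ni) expr0n.
Qed.

Lemma poly_lin0 (R : realType) (l c2 c3 c4 : R) :
  (forall t : R, 0 <= - (4 * l * t) + c2 * t ^+ 2 + c3 * t ^+ 3 + c4 * t ^+ 4) ->
  l = 0.
Proof.
move=> H.
set C := `|c2| + `|c3| + `|c4|.
have C0 : 0 <= C by rewrite /C !addr_ge0.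
set Dn := `|l| + C + 1.
have Dn0 : 0 < Dn by rewrite /Dn; have := normr_ge0 l; lra.
set t := l / Dn.
have tD : t * Dn = l by rewrite /t mulfVK // gt_eqF.
have ht : `|t| <= 1.
  rewrite /t normrM normfV (gtr0_norm Dn0) ler_pdivrMr // mul1r /Dn; lra.
have t2 : 0 <= t ^+ 2 by rewrite sqr_ge0.
have a2 : `|t| ^+ 2 = t ^+ 2 by rewrite -normrX ger0_norm.
have n0 : 0 <= `|t| by [].
have a3 : `|t| ^+ 3 <= t ^+ 2.
  by rewrite exprS -a2 -[X in _ <= X]mul1r ler_wpM2r // exprn_ge0.
have a4 : `|t| ^+ 4 <= t ^+ 2.
  rewrite exprS; apply: le_trans a3; rewrite -[X in _ <= X]mul1r ler_wpM2r // exprn_ge0 //.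
have b3 : c3 * t ^+ 3 <= `|c3| * t ^+ 2.
  apply: le_trans (ler_norm _) _.
  by rewrite normrM normrX; apply: ler_wpM2l.
have b4 : c4 * t ^+ 4 <= `|c4| * t ^+ 2.
  apply: le_trans (ler_norm _) _.
  by rewrite normrM normrX; apply: ler_wpM2l.
have b2 : c2 * t ^+ 2 <= `|c2| * t ^+ 2 by apply: ler_wpM2r => //; apply: ler_norm.
have key : 4 * l * t <= C * t ^+ 2.
  have := H t; rewrite /C; lra.
have tl : 0 <= t * l by rewrite -tD; nra.
have e : l ^+ 2 = Dn * (t * l) by rewrite -tD; rewrite !expr2; ring.
have : 4 * l ^+ 2 <= C * (t * l).
  have -> : 4 * l ^+ 2 = (4 * l * t) * Dn by rewrite -tD expr2; ring.
  have -> : C * (t * l) = (C * t ^+ 2) * Dn by rewrite -[X in _ * (_ * X)]tD expr2; ring.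
  by apply: ler_wpM2r => //; apply: ltW.
move=> k; apply/eqP; rewrite -sqrf_eq0; apply/eqP.
have l2 : 0 <= l ^+ 2 by apply: sqr_ge0.
have : C * (t * l) <= Dn * (t * l) by apply: ler_wpM2r => //; rewrite /Dn; have := normr_ge0 l; lra.
rewrite -e => k2.
nra.
Qed.

Lemma rot_lin0 (R : realType) (x l q1 q2 q3 : R) :
  (forall a s : R, (1 + a) ^+ 2 + s ^+ 2 = 1 ->
     0 <= - (2 * (a * x + s * l)) + a ^+ 2 * q1 + a * s * q2 + s ^+ 2 * q3) ->
  l = 0.
Proof.
move=> H; apply: (@poly_lin0 R l (4 * x + 4 * q3) (- 4 * l - 4 * q2) (4 * x + 4 * q1)).
move=> t.
have u0 : 0 < 1 + t ^+ 2 by have := sqr_ge0 t; lra.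
have un : 1 + t ^+ 2 != 0 by rewrite gt_eqF.
have := H (- 2 * t ^+ 2 / (1 + t ^+ 2)) (2 * t / (1 + t ^+ 2)).
have -> : (1 + - 2 * t ^+ 2 / (1 + t ^+ 2)) ^+ 2 + (2 * t / (1 + t ^+ 2)) ^+ 2 = 1.
  by field.
move=> /(_ erefl) h.
have h2 := mulr_ge0 h (sqr_ge0 (1 + t ^+ 2)).
apply: le_trans h2 _; rewrite le_eqVlt; apply/orP; left; apply/eqP; field; exact: un.
Qed.

Lemma cnorm_sub (R : realType) n (B : 'M[R]_n) (nu : R) (z : 'cV[R]_n) : B^T = B ->
  cnorm (nu *: z - B *m z) = nu ^+ 2 * cnorm z - 2 * nu * (z^T *m B *m z) 0 0 + cnorm (B *m z).
Proof.
move=> BT; rewrite /cnorm !linearB /= !linearZ /= trmx_mul BT.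
rewrite !mulmxBl.
rewrite ?mulmxBr -!scalemxAl !mulmxA !mxE; ring.
Qed.

Lemma sym_upper (R : realType) n (B : 'M[R]_n) (nu : R) : B^T = B -> 0 <= nu ->
  (forall z, cnorm (B *m z) <= nu ^+ 2 * cnorm z) ->
  forall z, (z^T *m B *m z) 0 0 <= nu * cnorm z.
Proof.
move=> BT nu0 H z.
have := cnorm_ge0 (nu *: z - B *m z); rewrite cnorm_sub // => h.
have h2 := H z.
have c0 := cnorm_ge0 z.
case: (ltrgt0P nu) nu0 => [np|//|e] _; last first.
  move: h2; rewrite e expr2 !mul0r => h2.
  have /cnorm_eq0 Bz : cnorm (B *m z) = 0 by apply/eqP; rewrite eq_le h2 cnorm_ge0.
  by rewrite -mulmxA Bz mulmx0 mxE.
have : 2 * nu * (z^T *m B *m z) 0 0 <= 2 * nu * (nu * cnorm z) by lra.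
by rewrite ler_pM2l // mulr_gt0.
Qed.

Lemma ord_sq (R : realType) k (s : 'rV[R]_k.+1) :
  (forall i j : 'I_k.+1, (i <= j)%N -> s 0 j <= s 0 i) -> (forall i, 0 <= s 0 i) ->
  forall i, s 0 ord_max ^+ 2 <= s 0 i ^+ 2 <= s 0 ord0 ^+ 2.
Proof.
move=> hord hnn i; rewrite !expr2; apply/andP; split; apply: ler_pM => //;
  apply: hord => //; exact: leq_ord.
Qed.

Lemma sigma_bounds (R : realType) k (Sig S12 : 'M[R]_k.+1) (sS : 'rV[R]_k.+1) :
  S12^T = S12 -> S12 \in unitmx -> S12 *m S12 = Sig -> singvals Sig sS ->
  forall x, sS 0 ord_max * cnorm x <= (x^T *m Sig *m x) 0 0 <= sS 0 ord0 * cnorm x.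
Proof.
move=> ST Su SS [hord [U2 [V2 sv]]] x.
have hnn : forall i, 0 <= sS 0 i by case: sv.
have hb := ord_sq hord hnn.
have SigT : Sig^T = Sig by rewrite -SS trmx_mul ST.
have quad : forall y, (y^T *m Sig *m y) 0 0 = cnorm (S12 *m y).
  by move=> y; rewrite /cnorm trmx_mul ST -SS !mulmxA.
apply/andP; split; last first.
  apply: sym_upper => // z.
  by have /andP[] := svd_bounds z sv hb.
case: (ltrgt0P (sS 0 ord_max)) (hnn ord_max) => [mp|//|->] _; last first.
  by rewrite mul0r quad cnorm_ge0.
set Si := invmx S12.
have SiT : Si^T = Si by rewrite /Si trmx_inv ST.
set Bi := Si *m Si.
have BiT : Bi^T = Bi by rewrite /Bi trmx_mul SiT.
have SigBi : Sig *m Bi = 1%:M.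
  by rewrite -SS /Bi mulmxA -(mulmxA S12 S12) mulmxV // mulmx1 mulmxV.
set mu := sS 0 ord_max.
have H1 : forall z, cnorm (Bi *m z) <= mu^-1 ^+ 2 * cnorm z.
  move=> z; have /andP[h _] := svd_bounds (Bi *m z) sv hb.
  move: h; rewrite mulmxA SigBi mul1mx -/mu => h.
  rewrite exprVn ler_pdivlMl ?exprn_gt0 //.
have := sym_upper BiT (ltW (_ : 0 < mu^-1)) H1 (S12 *m x).
rewrite invr_gt0 => /(_ mp).
have -> : ((S12 *m x)^T *m Bi *m (S12 *m x)) = x^T *m x.
  by rewrite trmx_mul ST /Bi !mulmxA -(mulmxA _ S12 Si) mulmxV // mulmx1 -(mulmxA _ Si S12) mulVmx // mulmx1.
rewrite -quad => h.
have := ler_wpM2l (ltW mp) h.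
by rewrite mulrA mulfV ?gt_eqF // mul1r.
Qed.

Lemma orth_comb (R : realType) n (D K : 'M[R]_n) (a s : R) :
  D *m D = D -> D *m K = K -> K *m D = K -> K *m K = - D -> D^T = D -> K^T = - K ->
  (1 + a) ^+ 2 + s ^+ 2 = 1 ->
  (1%:M + a *: D + s *: K)^T *m (1%:M + a *: D + s *: K) = 1%:M.
Proof.
move=> DD DK KD KK DT KT h.
have h2 : 2 * a + a ^+ 2 + s ^+ 2 = 0 by move: h; rewrite !expr2; lra.
rewrite !linearD /= !linearZ /= trmx1 DT KT.
rewrite !mulmxDl !mul1mx !mulmx1 -!scalemxAl !mulNmx DD DK KD KK.
apply/matrixP => r c; rewrite !mxE.
apply/eqP; rewrite -subr_eq0; apply/eqP.
transitivity (D r c * (2 * a + a ^+ 2 + s ^+ 2)); first ring.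
by rewrite h2 mulr0.
Qed.

Definition Dg (R : realType) n (i j : 'I_n) : 'M[R]_n := delta_mx i i + delta_mx j j.
Definition Kg (R : realType) n (i j : 'I_n) : 'M[R]_n := delta_mx j i - delta_mx i j.

Lemma givens_props (R : realType) n (i j : 'I_n) : i != j ->
  let D : 'M[R]_n := Dg R i j in
  let K : 'M[R]_n := Kg R i j in
  ((D *m D = D /\ D *m K = K) /\ (K *m D = K /\ K *m K = - D)) /\ (D^T = D /\ K^T = - K).
Proof.
move=> nij D K.
have nji : (j == i) = false by rewrite eq_sym (negbTE nij).
rewrite /D /K /Dg /Kg; (do ! split);
rewrite ?linearD ?linearB /= ?trmx_delta ?mulmxDl ?mulmxDr ?mulmxBl ?mulmxBr
  ?mul_delta_mx_cond ?eqxx ?nji ?(negbTE nij) ?mulr0n ?mulr1n ?addr0 ?add0r ?subr0 ?sub0r //;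
rewrite ?mulmxN ?mulNmx ?linearN /= ?trmx_delta ?opprK ?mul_delta_mx_cond ?eqxx ?nji ?(negbTE nij) ?mulr0n ?mulr1n ?addr0 ?add0r ?subr0 ?sub0r ?oppr0 ?opprK //.
by rewrite addrC.
Qed.

Lemma tr_lin (R : realType) m k (Dl : 'M[R]_(m, k)) (P : 'M[R]_m) (Z1 Z2 : 'M[R]_(m, k)) (a s : R) :
  \tr (Dl^T *m P *m (a *: Z1 + s *: Z2)) = a * \tr (Dl^T *m P *m Z1) + s * \tr (Dl^T *m P *m Z2).
Proof. by rewrite mulmxDr -!scalemxAr mxtraceD !mxtraceZ. Qed.

Lemma tr_quad (R : realType) m k (P : 'M[R]_m) (Z1 Z2 : 'M[R]_(m, k)) (a s : R) :
  \tr ((a *: Z1 + s *: Z2)^T *m P *m (a *: Z1 + s *: Z2)) =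
  a ^+ 2 * \tr (Z1^T *m P *m Z1) + a * s * (\tr (Z1^T *m P *m Z2) + \tr (Z2^T *m P *m Z1))
  + s ^+ 2 * \tr (Z2^T *m P *m Z2).
Proof.
rewrite linearD /= !linearZ /= mxtraceD !mxtraceZ raddfD /= !linearZ /= !mulmxDl -!scalemxAl !mxtraceD !mxtraceZ.
ring.
Qed.

Lemma proj_ineq (R : realType) m k (Dl Z : 'M[R]_(m, k)) (P Q : 'M[R]_m) :
  P = Q^T *m Q ->
  Num.sqrt (\tr (Dl^T *m P *m Dl)) <= Num.sqrt (\tr ((Dl - Z)^T *m P *m (Dl - Z))) ->
  0 <= - (2 * \tr (Dl^T *m P *m Z)) + \tr (Z^T *m P *m Z).
Proof.
move=> PQ.
have PT : P^T = P by rewrite PQ trmx_mul trmxK.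
have nn : forall W : 'M[R]_(m, k), 0 <= \tr (W^T *m P *m W).
  by move=> W; rewrite PQ -!mulmxA mulmxA -trmx_mul tr_ge0.
rewrite ler_sqrt // linearB /= raddfB /= raddfB /= !mulmxBl !raddfB /=.
have -> : \tr (Z^T *m P *m Dl) = \tr (Dl^T *m P *m Z).
  by rewrite -mxtrace_tr !trmx_mul trmxK PT mulmxA.
lra.
Qed.
Lemma expand_G (R : realType) m n (Th Xm : 'M[R]_(m, n)) (J Si D K : 'M[R]_n) (a s : R) :
  Th - Xm *m (J *m (1%:M + a *: D + s *: K))^T *m Si =
  (Th - Xm *m J^T *m Si) - (a *: (Xm *m D^T *m (J^T *m Si)) + s *: (Xm *m K^T *m (J^T *m Si))).
Proof.
rewrite trmx_mul !linearD /= !linearZ /= trmx1 -!mulmxA !mulmxDl !mulmxDr mul1mx.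
rewrite -!scalemxAl -!scalemxAr.
by rewrite !scalerN !opprD !addrA.
Qed.

Lemma part1 (R : realType) m k (P Q : 'M[R]_m) (Th Xm : 'M[R]_(m, k.+1))
  (J Si S12 : 'M[R]_k.+1) :
  P = Q^T *m Q -> J^T *m J = 1%:M -> Si *m S12 = 1%:M -> S12 *m Si = 1%:M ->
  S12^T = S12 ->
  (forall G, G^T *m G = 1%:M ->
     Num.sqrt (\tr ((Th - Xm *m J^T *m Si)^T *m P *m (Th - Xm *m J^T *m Si)))
     <= Num.sqrt (\tr ((Th - Xm *m (J *m G)^T *m Si)^T *m P
                        *m (Th - Xm *m (J *m G)^T *m Si)))) ->
  ((Th - Xm *m J^T *m Si)^T *m P *m (Xm *m J^T *m Si) *m (S12 *m S12))^T =
   (Th - Xm *m J^T *m Si)^T *m P *m (Xm *m J^T *m Si) *m (S12 *m S12).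
Proof.
move=> PQ JJ SiS SSi ST H.
set Y := J^T *m Si.
set ths := Xm *m J^T *m Si.
set Dl := Th - ths.
have key : forall i j : 'I_k.+1, i != j ->
    \tr (Dl^T *m P *m (Xm *m (Kg R i j)^T *m Y)) = 0.
  move=> i j nij.
  have [[[DD DK] [KD KK]] [DT KT]] := givens_props R nij.
  set ZD := Xm *m (Dg R i j)^T *m Y.
  set ZK := Xm *m (Kg R i j)^T *m Y.
  apply: (@rot_lin0 R (\tr (Dl^T *m P *m ZD)) _ (\tr (ZD^T *m P *m ZD))
    (\tr (ZD^T *m P *m ZK) + \tr (ZK^T *m P *m ZD)) (\tr (ZK^T *m P *m ZK))).
  move=> a s h.
  have Go := orth_comb DD DK KD KK DT KT h.
  have := H _ Go.
  rewrite expand_G.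
  move=> hh; have := @proj_ineq R m k.+1 Dl (a *: ZD + s *: ZK) P Q PQ hh.
  by rewrite tr_lin tr_quad !addrA.
set N := Y *m Dl^T *m P *m Xm.
have Nsym : N^T = N.
  apply/matrixP => r c; rewrite mxE; case: (eqVneq r c) => [->//|nrc].
  have := key c r; rewrite eq_sym => /(_ nrc).
  have -> : Dl^T *m P *m (Xm *m (Kg R c r)^T *m Y) = (Dl^T *m P *m Xm *m (Kg R c r)^T) *m Y.
    by rewrite !mulmxA.
  rewrite mxtrace_mulC.
  have -> : Y *m (Dl^T *m P *m Xm *m (Kg R c r)^T) = N *m (Kg R c r)^T by rewrite /N !mulmxA.
  rewrite /Kg linearB /= !trmx_delta mulmxBr raddfB /= !tr_delta.
  by move/eqP; rewrite subr_eq0 => /eqP.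
have JJt : J *m J^T = 1%:M by apply: mulmx1C.
have XmE : Xm = ths *m S12 *m J.
  by rewrite /ths -!mulmxA (mulmxA Si) SiS mul1mx JJ mulmx1.
set Mm := Si *m Dl^T *m P *m ths *m S12.
have NM : N = J^T *m Mm *m J.
  by rewrite /N /Y /Mm [in LHS]XmE !mulmxA.
clearbody N.
have ME : Mm = J *m N *m J^T.
  by rewrite NM !mulmxA JJt mul1mx -mulmxA JJt mulmx1 /Mm /ths !mulmxA.
have Msym : Mm^T = Mm.
  clear NM; move: ME; clearbody Mm => ME.
  by rewrite {1}ME !trmx_mul trmxK Nsym mulmxA.
have TE : Dl^T *m P *m ths *m (S12 *m S12) = S12 *m Mm *m S12.
  by rewrite /Mm !mulmxA SSi mul1mx.
rewrite TE; move: Msym; clearbody Mm => Msym.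
by rewrite !trmx_mul ST Msym !mulmxA.
Qed.
Lemma cnorm_col (R : realType) m n (a : 'cV[R]_m) (b : 'cV[R]_n) :
  cnorm (col_mx a b) = cnorm a + cnorm b.
Proof. by rewrite /cnorm tr_col_mx mul_row_col mxE. Qed.

Lemma diag_sqrt_svd (R : realType) n (g : 'rV[R]_n) :
  is_svd (diag_sqrt g) 1%:M (map_mx Num.sqrt g) 1%:M.
Proof.
split; rewrite ?trmx1 ?mulmx1 ?mul1mx //.
by move=> i; rewrite mxE sqrtr_ge0.
Qed.

Lemma W_bounds (R : realType) p k (U : 'M[R]_(p, k.+1)) (V J S12 Sig : 'M[R]_k.+1)
  (g sS : 'rV[R]_k.+1) (lo hi : R) (W : 'M[R]_(p + k.+1, k.+1)) :
  U^T *m U = 1%:M -> V^T *m V = 1%:M -> J *m J^T = 1%:M ->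
  S12^T = S12 -> S12 \in unitmx -> S12 *m S12 = Sig -> singvals Sig sS ->
  0 <= lo -> (forall i, lo <= g 0 i <= hi) ->
  W = col_mx (U *m diag_sqrt g) (V *m diag_sqrt g) *m (J^T *m S12) ->
  forall x, 2 * lo * sS 0 ord_max * cnorm x <= cnorm (W *m x)
            <= 2 * hi * sS 0 ord0 * cnorm x.
Proof.
move=> UU VV JJt ST Su SS sv lo0 hg WE x.
set y := J^T *m S12 *m x.
have e1 : cnorm (W *m x) = 2 * cnorm (diag_sqrt g *m y).
  rewrite WE /y -!mulmxA mul_col_mx cnorm_col -!mulmxA (cnormU _ UU) (cnormU _ VV); lra.
have hb : forall i, lo <= map_mx Num.sqrt g 0 i ^+ 2 <= hi.
  move=> i; rewrite mxE sqr_sqrtr //; have /andP[h _] := hg i; exact: le_trans h.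
have /andP[g1 g2] := svd_bounds y (diag_sqrt_svd g) hb.
have ey : cnorm y = (x^T *m Sig *m x) 0 0.
  rewrite /y -mulmxA cnormU; last by rewrite trmxK.
  by rewrite /cnorm trmx_mul ST -SS !mulmxA.
have /andP[s1 s2] := sigma_bounds ST Su SS sv x.
have hi0 : 0 <= hi by have /andP[h1 h2] := hg ord0; apply: le_trans lo0 (le_trans h1 h2).
have c0 := cnorm_ge0 x.
have cy0 := cnorm_ge0 y.
rewrite e1; rewrite -ey in s1 s2; apply/andP; split.
  have := ler_wpM2l lo0 s1; rewrite mulrA => h; lra.
have := ler_wpM2l hi0 s2; rewrite mulrA => h; lra.
Qed.

Lemma sq_le (R : realType) (a b : R) : 0 <= a -> 0 <= b -> a ^+ 2 <= b ^+ 2 -> a <= b.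
Proof. by move=> a0 b0; rewrite ler_sqr ?nnegrE. Qed.


Unset Implicit Arguments.
Set Strict Implicit.

Theorem lemma1 (R : realType) (p d : nat)
  (Sigma : 'M[R]_d.+1) (M : 'M[R]_(p, d.+1)) (S12 : 'M[R]_d.+1)
  (U : 'M[R]_(p, d.+1)) (g : 'rV[R]_d.+1) (V : 'M[R]_d.+1)
  (A : 'M[R]_(p, d.+1)) (B : 'M[R]_d.+1) (thstar : 'M[R]_(p + d.+1, d.+1)) :
  (d.+1 <= p)%N ->
  posdef Sigma ->
  (* S12 = Sigma^{1/2}, the positive definite square root *)
  posdef S12 -> S12 *m S12 = Sigma ->
  \rank (M *m S12) = d.+1 ->
  (* U Gamma V^T is an SVD of M Sigma^{1/2}, Gamma = diag g positive definite *)
  U^T *m U = 1%:M -> V^T *m V = 1%:M -> (forall i, 0 < g 0 i) ->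
  M *m S12 = U *m diag_mx g *m V^T ->
  (* thstar is the P-norm projection of theta = (A, B) onto S *)
  inS U g V S12 thstar ->
  (forall th, inS U g V S12 th ->
     Pnorm (Pmat p Sigma) (col_mx A B - thstar)
       <= Pnorm (Pmat p Sigma) (col_mx A B - th)) ->
  let Delta := col_mx A B - thstar in
  let P := Pmat p Sigma in
  let P12 : 'M[R]_(p + d.+1) := block_mx 1%:M 0 0 S12 in
  (* 1. symmetry *)
  (Delta^T *m P *m thstar *m Sigma)^T = Delta^T *m P *m thstar *m Sigma /\
  (* 2. bounds on extreme singular values, for the ordered singular values *)
  (forall sMS sS sT : 'rV[R]_d.+1,
     singvals (M *m S12) sMS -> singvals Sigma sS ->
     singvals (P12 *m thstar *m Sigma) sT ->
     let K0 := 2 * sMS 0 ord_max * sS 0 ord_max in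
     let K1 := 2 * sMS 0 ord0 * sS 0 ord0 in
     K0 <= sT 0 ord_max ^+ 2 /\ sT 0 ord0 ^+ 2 <= K1).
Proof.
move=> hp Sigpd S12pd SS rk UU VV gpos MSsvd [J [Jo thE]] opt Delta P P12.
have ST : S12^T = S12 by case: S12pd.
have Su := posdef_unit S12pd.
set Si := invmx S12.
have SiS : Si *m S12 = 1%:M by apply: mulVmx.
have SSi : S12 *m Si = 1%:M by apply: mulmxV.
set Xm := col_mx (U *m diag_sqrt g) (Si *m V *m diag_sqrt g).
have SelE : forall J', Selem U g V S12 J' = Xm *m J'^T *m Si.
  by move=> J1; rewrite /Selem /Xm !mul_col_mx.
have PQ : P = P12^T *m P12.
  rewrite /P /P12 /Pmat tr_block_mx !trmx0 trmx1 ST mulmx_block.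
  by rewrite !mul1mx !mulmx0 !mul0mx !addr0 !add0r SS.
have JJt : J *m J^T = 1%:M by apply: mulmx1C.
split.
  have H : forall G, G^T *m G = 1%:M ->
     Num.sqrt (\tr ((col_mx A B - Xm *m J^T *m Si)^T *m P *m (col_mx A B - Xm *m J^T *m Si)))
     <= Num.sqrt (\tr ((col_mx A B - Xm *m (J *m G)^T *m Si)^T *m P
                        *m (col_mx A B - Xm *m (J *m G)^T *m Si))).
    move=> G GG.
    have := opt (Selem U g V S12 (J *m G)).
    rewrite /Pnorm thE !SelE; apply.
    exists (J *m G); split => //.
    by rewrite /Defs.orthogonal trmx_mul mulmxA -(mulmxA G^T) (Jo : J^T *m J = 1%:M) mulmx1.
  have := part1 PQ Jo SiS SSi ST H.
  by rewrite /Delta thE SelE SS.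
move=> sMS sS sT svMS svS svT K0 K1.
have svd1 : is_svd (M *m S12) U g V.
  by split => // i; apply: ltW.
case: (svMS) => hordM [U' [V' sv']].
have hnn' : forall i, 0 <= sMS 0 i by case: sv'.
have hbM := ord_sq hordM hnn'.
have gb : forall i, sMS 0 ord_max <= g 0 i <= sMS 0 ord0.
  move=> i; have [c1 c2] := svd_col i svd1.
  have /andP[l u] := svd_bounds (V *m delta_mx i 0) sv' hbM.
  rewrite c1 c2 !mulr1 in l u.
  apply/andP; split.
    exact: (sq_le (hnn' ord_max) (ltW (gpos i)) l).
  exact: (sq_le (ltW (gpos i)) (hnn' ord0) u).
have WE : P12 *m thstar *m Sigma = col_mx (U *m diag_sqrt g) (V *m diag_sqrt g) *m (J^T *m S12).
  rewrite thE SelE -SS /Xm /P12 !mulmxA mul_block_col !mul1mx !mul0mx addr0 add0r.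
  by rewrite !mulmxA SSi mul1mx -(mulmxA _ Si S12) SiS mulmx1.
have Wb := W_bounds UU VV JJt ST Su SS svS (hnn' ord_max) gb WE.
case: (svT) => hordT [U3 [V3 sv3]].
split.
  have [c1 c2] := svd_col ord_max sv3.
  have /andP[l _] := Wb (V3 *m delta_mx ord_max 0).
  by rewrite c1 c2 mulr1 in l.
have [c1 c2] := svd_col ord0 sv3.
have /andP[_ u] := Wb (V3 *m delta_mx ord0 0).
by rewrite c1 c2 mulr1 in u.
Qed.
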